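(* Let $p$ be a prime and $n>1$ an integer, and let $s$ denote the smallest prime divisor of $n$. Then for each $t\in\{2,3\}$ there exists a $t$-fold blocking set of size $t\left(p^n+p^{n(s-1)/s}+1\right)$ in $\mathrm{PG}(2,p^n)$.
   Context: $\mathrm{PG}(2,q)$ denotes the Desarguesian projective plane over the finite field $\mathbb{F}_q$. A $t$-fold blocking set of a projective plane is a set of points meeting every line of the plane in at least $t$ points. *)

(* Defs.v *)
From HB Require Import structures.
From mathcomp Require Import all_boot all_order all_algebra all_field.
Set Implicit Arguments. Unset Strict Implicit. Unset Printing Implicit Defensive.
Import GRing.Theory.
Local Open Scope ring_scope.

(* A point is a 1-dimensional subspace of F^3, represented as the set of
   its vectors {a v | a in F} for some nonzero row vector v.
   A line is given by a nonzero column vector l (its dual coordinates);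
   the point spanned by v lies on l iff v *m l = 0. *)
Definition pg2_point (F : finFieldType) (P : {set 'rV[F]_3}) : bool :=
  [exists v : 'rV[F]_3, (v != 0) && (P == [set a *: v | a : F])].

Definition pg2_incident (F : finFieldType) (P : {set 'rV[F]_3}) (l : 'cV[F]_3) : bool :=
  [forall v in P, v *m l == 0].

Definition pg2_tfold_blocking_set (F : finFieldType) (t : nat)
    (B : {set {set 'rV[F]_3}}) : Prop :=
  (forall P, P \in B -> pg2_point P) /\
  (forall l : 'cV[F]_3, l != 0 -> (t <= #|[set P in B | pg2_incident P l]|)%N).

(* Main.v *)
Require Import Defs.
From mathcomp Require Import all_boot all_order all_algebra all_field.
From mathcomp Require Import zify ring.
Set Implicit Arguments. Unset Strict Implicit. Unset Printing Implicit Defensive.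
Import GRing.Theory.
Section Geo.
Local Open Scope ring_scope.
Variable F : finFieldType.

Definition i0 : 'I_3 := @Ordinal 3 0 isT.
Definition i1 : 'I_3 := @Ordinal 3 1 isT.
Definition i2 : 'I_3 := @Ordinal 3 2 isT.

Definition v3 (a b c : F) : 'rV[F]_3 := \row_(i < 3) [:: a; b; c]`_i.

Lemma v3E0 a b c : v3 a b c 0 i0 = a. Proof. by rewrite mxE. Qed.
Lemma v3E1 a b c : v3 a b c 0 i1 = b. Proof. by rewrite mxE. Qed.
Lemma v3E2 a b c : v3 a b c 0 i2 = c. Proof. by rewrite mxE. Qed.

Lemma v3_inj a b c a' b' c' : v3 a b c = v3 a' b' c' -> [/\ a = a', b = b' & c = c'].
Proof.
move=> e; split.
- by rewrite -(v3E0 a b c) -(v3E0 a' b' c') e.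
- by rewrite -(v3E1 a b c) -(v3E1 a' b' c') e.
- by rewrite -(v3E2 a b c) -(v3E2 a' b' c') e.
Qed.

Lemma v3Z k a b c : k *: v3 a b c = v3 (k * a) (k * b) (k * c).
Proof.
apply/rowP => i; rewrite !mxE.
by case: i => [[|[|[|i]]] hi] //=; rewrite mulr0.
Qed.

Lemma v3B a b c a' b' c' : v3 a b c - v3 a' b' c' = v3 (a - a') (b - b') (c - c').
Proof.
apply/rowP => i; rewrite !mxE.
by case: i => [[|[|[|i]]] hi] //=; rewrite subrr.
Qed.

Lemma v3_0 : v3 0 0 0 = 0.
Proof. by apply/rowP => i; rewrite !mxE; case: i => [[|[|[|i]]] hi]. Qed.

Lemma v3_eq0 a b c : v3 a b c = 0 -> [/\ a = 0, b = 0 & c = 0].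
Proof. by rewrite -v3_0 => /v3_inj. Qed.

Lemma v3_neq0 a b c : (a != 0) || (b != 0) || (c != 0) -> v3 a b c != 0.
Proof.
move=> h; apply/eqP => /v3_eq0 [ha hb hc]; move: h; by rewrite ha hb hc eqxx.
Qed.

Lemma v3_mul a b c (l : 'cV[F]_3) :
  (v3 a b c *m l) 0 0 = a * l i0 0 + b * l i1 0 + c * l i2 0.
Proof.
rewrite mxE !big_ord_recr big_ord0 /= add0r !mxE /=.
have -> : (widen_ord (leqnSn 2) (widen_ord (leqnSn 1) ord_max)) = i0 by apply: val_inj.
have -> : (widen_ord (leqnSn 2) ord_max) = i1 by apply: val_inj.
have -> : (@ord_max 2) = i2 by apply: val_inj.
by [].
Qed.

Lemma mx11_eq0 (M : 'M[F]_1) : M 0 0 = 0 -> M = 0.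
Proof. by move=> h; apply/matrixP => i j; rewrite !ord1 h mxE. Qed.

Definition pt (u : 'rV[F]_3) : {set 'rV[F]_3} := [set k *: u | k : F].

Lemma pt_point u : u != 0 -> pg2_point (pt u).
Proof. by move=> nz; apply/existsP; exists u; rewrite nz eqxx. Qed.

Lemma pt_inc u (l : 'cV[F]_3) : u *m l = 0 -> pg2_incident (pt u) l.
Proof.
move=> h; apply/forall_inP => v /imsetP [k _ ->].
by rewrite -scalemxAl h scaler0.
Qed.

Lemma pt_eq u v : pt u = pt v -> exists k, u = k *: v.
Proof.
move=> e; have : u \in pt v by rewrite -e; apply/imsetP; exists 1; rewrite ?scale1r.
by case/imsetP => k _ ->; exists k.
Qed.

Lemma pt_scale k u : k != 0 -> pt (k *: u) = pt u.
Proof.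
move=> nzk; apply/setP => w; apply/imsetP/imsetP => [[j _ ->]|[j _ ->]].
- by exists (j * k); rewrite ?scalerA.
- by exists (j / k); rewrite // scalerA mulfVK.
Qed.

Lemma noninj (T : finType) (D : {set T}) (g : T -> F) :
  (#|F| < #|D|)%N -> exists a b, [/\ a \in D, b \in D, a != b & g a = g b].
Proof.
move=> hD.
case: (boolP [exists a in D, exists b in D, (a != b) && (g a == g b)]).
  case/exists_inP => a aD /exists_inP [b bD /andP [nab /eqP gab]].
  by exists a, b.
move=> hn; exfalso.
have inj : {in D &, injective g}.
  move=> a b aD bD gab; apply/eqP; apply: contraNT hn => nab.
  by apply/exists_inP; exists a => //; apply/exists_inP; exists b => //; rewrite nab gab eqxx.
by move: (max_card (mem (g @: D))); rewrite card_in_imset // leqNgt hD.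
Qed.

Lemma card_roots (P : {poly F}) : P != 0 -> (#|[set x | root P x]| < size P)%N.
Proof.
move=> nzP; rewrite cardE; apply: max_poly_roots => //; last exact: enum_uniq.
by apply/allP => x; rewrite mem_enum inE.
Qed.

End Geo.

Lemma card_bigcup_le (T I : finType) (P : pred I) (G : I -> {set T}) :
  (#|\bigcup_(i | P i) G i| <= \sum_(i | P i) #|G i|)%N.
Proof.
apply: (big_ind2 (fun (A : {set T}) (m : nat) => #|A| <= m)%N) => //.
- by rewrite cards0.
- move=> A m B n hA hB; apply: leq_trans (leq_card_setU A B) _.
  exact: leq_add.
Qed.
Section Main.
Local Open Scope ring_scope.
Variable F : finFieldType.
Variables r s : nat.
Hypothesis r_gt1 : (1 < r)%N.
Hypothesis s_gt1 : (1 < s)%N.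
Hypothesis r_pchar : [pchar F].-nat r.
Hypothesis cardF : #|F| = (r ^ s)%N.

Definition Kset : {set F} := [set x : F | x ^+ r == x].
Definition Tr (x : F) : F := \sum_(i < s) x ^+ (r ^ i).

Lemma frobD i (x y : F) : (x + y) ^+ (r ^ i) = x ^+ (r ^ i) + y ^+ (r ^ i).
Proof. apply: exprDn_pchar; rewrite pnatX r_pchar //. Qed.

Lemma frobN i (x : F) : (- x) ^+ (r ^ i) = - x ^+ (r ^ i).
Proof.
have := frobD i (- x) x; rewrite addNr expr0n expn_eq0.
have -> : (r == 0%N) = false by case: r r_gt1.
by move=> /esym/eqP; rewrite addr_eq0 => /eqP.
Qed.

Lemma TrD (x y : F) : Tr (x + y) = Tr x + Tr y.
Proof. by rewrite /Tr -big_split /=; apply: eq_bigr => i _; rewrite frobD. Qed.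

Lemma TrN (x : F) : Tr (- x) = - Tr x.
Proof. by rewrite /Tr -sumrN; apply: eq_bigr => i _; rewrite frobN. Qed.

Lemma TrB (x y : F) : Tr (x - y) = Tr x - Tr y.
Proof. by rewrite TrD TrN. Qed.

Lemma Tr0 : Tr (0 : F) = 0.
Proof. by have := TrB 0 0; rewrite subrr => ->; rewrite subrr. Qed.

Lemma inK (x : F) : (x \in Kset) = (x ^+ r == x).
Proof. by rewrite inE. Qed.

Lemma Kpow (x : F) i : x \in Kset -> x ^+ (r ^ i) = x.
Proof.
rewrite inK => /eqP xr; elim: i => [|i IH]; first by rewrite expr1.
by rewrite expnSr exprM IH.
Qed.

Lemma expF (x : F) : x ^+ (r ^ s) = x.
Proof. by rewrite -cardF expf_card. Qed.

Lemma frob0 i : (0 : F) ^+ (r ^ i) = 0.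
Proof. by rewrite expr0n expn_eq0; case: r r_gt1. Qed.

Lemma TrK (x : F) : Tr x \in Kset.
Proof.
rewrite inK /Tr.
have E : (\sum_(i < s) x ^+ (r ^ i)) ^+ (r ^ 1) = \sum_(i < s) x ^+ (r ^ i.+1).
  rewrite (big_morph (fun y : F => y ^+ (r ^ 1)) (frobD 1) (frob0 1)).
  by apply: eq_bigr => i _; rewrite -exprM -expnSr.
rewrite expn1 in E; rewrite E; apply/eqP.
case: s s_gt1 expF => // s' _ eF.
rewrite big_ord_recr big_ord_recl /= eF expn0 expr1 addrC; congr (_ + _).
Qed.

Lemma K0 : (0 : F) \in Kset. Proof. by rewrite inK; apply/eqP; move: (frob0 1); rewrite expn1. Qed.
Lemma K1 : (1 : F) \in Kset. Proof. by rewrite inK expr1n. Qed.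
Lemma KD (x y : F) : x \in Kset -> y \in Kset -> x + y \in Kset.
Proof. by rewrite !inK => /eqP hx /eqP hy; move: (frobD 1 x y); rewrite expn1 hx hy => ->. Qed.
Lemma KN (x : F) : x \in Kset -> - x \in Kset.
Proof. by rewrite !inK => /eqP hx; move: (frobN 1 x); rewrite expn1 hx => ->. Qed.
Lemma KB (x y : F) : x \in Kset -> y \in Kset -> x - y \in Kset.
Proof. by move=> hx hy; apply: KD => //; apply: KN. Qed.
Lemma KM (x y : F) : x \in Kset -> y \in Kset -> x * y \in Kset.
Proof. by rewrite !inK => /eqP hx /eqP hy; rewrite exprMn hx hy. Qed.
Lemma KV (x : F) : x \in Kset -> x^-1 \in Kset.
Proof. by rewrite !inK => /eqP hx; rewrite exprVn hx. Qed.

Lemma TrZ (k x : F) : k \in Kset -> Tr (k * x) = k * Tr x.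
Proof.
move=> hk; rewrite /Tr mulr_sumr; apply: eq_bigr => i _.
by rewrite exprMn (Kpow i hk).
Qed.


Definition PTr (g v : F) : {poly F} :=
  \sum_(i < s) (g ^+ (r ^ i)) *: 'X^(r ^ i) - v%:P.

Lemma PTrE (g v x : F) : (PTr g v).[x] = Tr (g * x) - v.
Proof.
rewrite /PTr /Tr hornerD hornerN hornerC horner_sum; congr (_ - _).
by apply: eq_bigr => i _; rewrite hornerZ hornerXn exprMn.
Qed.

Lemma rexp_le i : (i < s)%N -> (r ^ i <= r ^ s.-1)%N.
Proof. by move=> lis; rewrite leq_exp2l // -ltnS prednK // (ltn_trans _ s_gt1). Qed.

Lemma PTr_coef (g v : F) j : (r ^ s.-1 < j)%N -> (PTr g v)`_j = 0.
Proof.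
move=> hj; rewrite coefB coefC coef_sum.
have -> : (j == 0%N) = false by case: j hj.
rewrite subr0 big1 // => i _; rewrite coefZ coefXn.
have -> : (j == r ^ i)%N = false.
  by apply/negbTE; rewrite neq_ltn (leq_ltn_trans (rexp_le (ltn_ord i)) hj) orbT.
by rewrite mulr0.
Qed.

Lemma PTr_size (g v : F) : (size (PTr g v) <= (r ^ s.-1).+1)%N.
Proof. by apply/leq_sizeP => j hj; apply: PTr_coef. Qed.

Lemma PTr_top (g v : F) : (PTr g v)`_(r ^ s.-1) = g ^+ (r ^ s.-1).
Proof.
rewrite coefB coefC coef_sum.
have -> : ((r ^ s.-1)%N == 0%N) = false by rewrite expn_eq0; case: r r_gt1.
rewrite subr0.
have ls : (s.-1 < s)%N by rewrite prednK // (ltn_trans _ s_gt1).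
rewrite (bigD1 (Ordinal ls)) //= coefZ coefXn eqxx mulr1 big1 ?addr0 // => i hi.
rewrite coefZ coefXn.
have -> : (r ^ s.-1 == r ^ i)%N = false.
  rewrite eqn_exp2l //; apply/negP => /eqP e; move: hi; rewrite -val_eqE /= e eqxx //.
by rewrite mulr0.
Qed.

Lemma card_Trfiber (g v : F) : g != 0 -> (#|[set x | Tr (g * x)%R == v]| <= r ^ s.-1)%N.
Proof.
move=> nzg.
have nzP : PTr g v != 0.
  apply/eqP => P0; move: (PTr_top g v); rewrite P0 coef0 => /esym/eqP.
  by rewrite expf_eq0 (negbTE nzg) andbF.
have h1 := card_roots nzP; have h2 := PTr_size g v.
have : (#|[set x | root (PTr g v) x]| <= r ^ s.-1)%N by rewrite -ltnS (leq_trans h1 h2).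
apply: leq_trans; apply: subset_leq_card; apply/subsetP => x.
by rewrite !inE /root PTrE subr_eq0.
Qed.

Lemma card_K : (#|Kset| <= r)%N.
Proof.
have nzP : ('X^r - 'X : {poly F}) != 0.
  by rewrite -size_poly_eq0 size_polyDl ?size_polyXn // size_polyN size_polyX ltnS.
have := card_roots nzP; rewrite size_polyDl ?size_polyXn ?size_polyN ?size_polyX ?ltnS //.
apply: leq_trans; apply: subset_leq_card; apply/subsetP => x.
by rewrite !inE /root !hornerE subr_eq0.
Qed.

Section Redei.
Local Notation K := Kset.
Local Notation T := Tr.

Definition Dom : {set F * F} := setX [set: F] K :\ (0, 0).

Definition Lset (f : F -> F -> 'rV[F]_3) : {set {set 'rV[F]_3}} :=
  [set pt (f xc.1 xc.2) | xc in Dom].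

Variable f : F -> F -> 'rV[F]_3.
Hypothesis fB : forall x1 c1 x2 c2, f (x1 - x2) (c1 - c2) = f x1 c1 - f x2 c2.
Hypothesis fZ : forall k x c, k \in K -> f (k * x) (k * c) = k *: f x c.
Hypothesis fnz : forall x c, c \in K -> f x c = 0 -> x = 0 /\ c = 0.
Variable g0 : 'rV[F]_3.
Hypothesis fker : forall x, T x = 0 -> f x 0 = x *: g0.

Lemma inDom (x c : F) : ((x, c) \in Dom) = (c \in K) && ((x != 0) || (c != 0)).
Proof.
by rewrite in_setD1 in_setX in_setT /= xpair_eqE negb_and andbC.
Qed.

Lemma f_neq0 (x c : F) : (x, c) \in Dom -> f x c != 0.
Proof.
rewrite inDom => /andP [cK h]; apply/eqP => /(fnz cK) [hx hc].
by move: h; rewrite hx hc eqxx.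
Qed.

Lemma Lset_point P : P \in Lset f -> pg2_point P.
Proof. by case/imsetP => [[x c] xcD ->]; apply: pt_point; apply: f_neq0. Qed.

Lemma card_K2 : (2 <= #|K|)%N.
Proof.
have -> : 2%N = #|[set (0 : F); 1]| by rewrite cards2 eq_sym oner_eq0.
apply: subset_leq_card; apply/subsetP => x; rewrite in_set2.
by case/orP => /eqP ->; [apply: K0 | apply: K1].
Qed.

Lemma Lset_block (l : 'cV[F]_3) : exists P, P \in Lset f /\ pg2_incident P l.
Proof.
pose D := setX [set: F] K.
have hD : (#|F| < #|D|)%N.
  rewrite cardsX cardsT -{1}(muln1 #|F|) ltn_mul2l card_K2 andbT.
  by apply/card_gt0P; exists 0.
have [[x1 c1] [[x2 c2] [aD bD nab e]]] := noninj (fun xc : F * F => (f xc.1 xc.2 *m l) 0 0) hD.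
move: aD bD; rewrite !in_setX !in_setT /= => c1K c2K.
exists (pt (f (x1 - x2) (c1 - c2))); split.
  apply/imsetP; exists (x1 - x2, c1 - c2) => //.
  rewrite inDom KB //=.
  have H : ((x1 : F) - x2 != 0) || ((c1 : F) - c2 != 0).
    case: (eqVneq (x1 : F) x2) => [ex|nx]; last by rewrite subr_eq0 nx.
    by move: nab; rewrite ex xpair_eqE eqxx /= subrr eqxx /= subr_eq0.
  exact: H.
apply: pt_inc; apply: mx11_eq0; rewrite fB mulmxBl; move: e; rewrite /= !mxE => ->.
by rewrite subrr.
Qed.

Lemma Lset_card : (#|Lset f| <= #|F| + r ^ s.-1 + 1)%N.
Proof.
pose A := [set pt (f x 1) | x : F].
pose C := [set pt (f u 0) | u in [set u | T (1 * u) == 1]].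
have sub : Lset f \subset A :|: C :|: [set pt g0].
  apply/subsetP => P /imsetP [[x c] xcD ->] /=.
  move: xcD; rewrite inDom => /andP [cK h].
  have [c0|nzc] := eqVneq c 0.
    move: h; rewrite c0 eqxx orbF => nzx.
    have [Tx0|nzT] := eqVneq (T x) 0.
      by rewrite fker // pt_scale // !inE eqxx orbT.
    have TxK := TrK x.
    have -> : f x 0 = T x *: f ((T x)^-1 * x) 0.
      by rewrite -fZ // mulrA mulfV // mul1r mulr0.
    rewrite pt_scale //; apply/setUP; left; apply/setUP; right.
    apply/imsetP; exists ((T x)^-1 * x) => //.
    by rewrite inE mul1r TrZ ?mulVf // KV.
  have -> : f x c = c *: f (c^-1 * x) 1.
    by rewrite -fZ // mulrA mulfV // mul1r mulr1.
  rewrite pt_scale //; apply/setUP; left; apply/setUP; left.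
  by apply/imsetP; exists (c^-1 * x).
apply: (leq_trans (subset_leq_card sub)).
rewrite (leq_trans (leq_card_setU _ _)) // cards1 leq_add2r.
rewrite (leq_trans (leq_card_setU _ _)) // leq_add //.
  by rewrite (leq_trans (leq_imset_card _ _)) // cardsT.
rewrite (leq_trans (leq_imset_card _ _)) //.
by apply: card_Trfiber => //; rewrite oner_eq0.
Qed.

End Redei.
Local Notation K := Kset.
Local Notation T := Tr.
Local Notation R := (r ^ s.-1)%N.

Lemma R_lt : (R < #|F|)%N.
Proof. by rewrite cardF ltn_exp2l // prednK // ltnW. Qed.

Lemma rR : (r * R)%N = #|F|.
Proof. by rewrite cardF -expnS prednK // ltnW. Qed.

Lemma R_ge2 : (2 <= R)%N.
Proof.
apply: leq_trans r_gt1 _; rewrite -{1}(expn1 r) leq_exp2l //.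
by rewrite -ltnS prednK // ltnW.
Qed.

Lemma Tr_nz : exists x : F, T x != 0.
Proof.
have h := @card_Trfiber 1 0 (oner_neq0 F).
have : ~~ ([set: F] \subset [set x | T (1 * x) == 0]).
  apply/negP => /subset_leq_card; rewrite cardsT leqNgt.
  by rewrite (leq_ltn_trans h R_lt).
case/subsetPn => x _; rewrite inE mul1r => nz; by exists x.
Qed.

Lemma Tr_one : exists x : F, T x = 1.
Proof.
have [x nz] := Tr_nz; exists ((T x)^-1 * x).
by rewrite TrZ ?mulVf // KV // TrK.
Qed.

Lemma Tr_ker : exists y : F, y != 0 /\ T y = 0.
Proof.
have : ~~ injectiveb T.
  apply/negP => /injectiveP inj.
  have h := card_imset (mem [set: F]) inj.
  have sub : [set T x | x in [set: F]] \subset K.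
    by apply/subsetP => z /imsetP [x _ ->]; apply: TrK.
  move: (subset_leq_card sub); rewrite h cardsT => h2.
  have h3 := leq_trans h2 card_K; rewrite cardF in h3.
  have h4 : (r ^ 1 < r ^ s)%N by rewrite ltn_exp2l.
  by rewrite expn1 in h4; move: (leq_ltn_trans h3 h4); rewrite ltnn.
case/injectivePn => x [y nxy exy]; exists (x - y); split.
  by rewrite subr_eq0.
by rewrite TrB exy subrr.
Qed.
Lemma params : exists be nu d : F,
  [/\ be \notin K, T nu = 1, d \in K, d != T (nu * be) - 1
    & d != T (nu * (be * be)) + T (nu * be) * (1 - T (nu * be))].
Proof.
have [x1 Tx1] := Tr_one.
have [y [nzy Ty]] := Tr_ker.
have nzx1 : x1 != 0.
  apply/eqP => e; move: Tx1; rewrite e Tr0 => /eqP; by rewrite eq_sym oner_eq0.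
pose be := x1^-1 * y.
have hxy : x1 * be = y by rewrite /be mulrA mulfV // mul1r.
have beK : be \notin K.
  apply/negP => bK.
  have : T (x1 * be) = be by rewrite mulrC TrZ // Tx1 mulr1.
  rewrite hxy Ty => be0; move: nzy; by rewrite -hxy -be0 mulr0 eqxx.
pose g0 := T (x1 * (be * be)).
case: (boolP [exists d in K, (d != -1) && (d != g0)]).
  case/exists_inP => d dK /andP [h1 h2]; exists be, x1, d; split => //.
    by rewrite hxy Ty sub0r.
  by rewrite hxy Ty mul0r addr0.
move=> hn.
have Kb : forall d, d \in K -> (d == -1) || (d == g0).
  move=> d dK; apply: contraNT hn => h; apply/exists_inP; exists d => //.
  by rewrite -negb_or.
have g00 : g0 = 0.
  case/orP: (Kb 0 K0) => /eqP h //.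
  by move/eqP: h; rewrite eq_sym oppr_eq0 oner_eq0.
have m11 : (-1 : F) = 1.
  case/orP: (Kb 1 K1) => /eqP h; first by rewrite -h.
  by move/eqP: h; rewrite g00 oner_eq0.
have two0 : (1 + 1 : F) = 0 by rewrite -{1}m11 addNr.
have K01 : forall z, z \in K -> z = 0 \/ z = 1.
  by move=> z zK; case/orP: (Kb z zK) => /eqP ->; [right | left].
pose ga := be + be * be.
have be0 : be != 0 by apply: contraNneq beK => ->; exact: K0.
have be1 : 1 + be != 0.
  apply/eqP => h; have hb : be = -1 by apply/eqP; rewrite -addr_eq0 addrC h.
  by move: beK; rewrite hb m11 K1.
have nzga : ga != 0 by rewrite /ga -{1}(mulr1 be) -mulrDr mulf_neq0.
have [nu [Tnu Tganu]] : exists nu, T nu = 1 /\ T (ga * nu) = 1.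
  case: (K01 _ (TrK (ga * x1))) => h1; last by exists x1.
  pose t2 := ga^-1 * x1.
  have Tt2 : T (ga * t2) = 1 by rewrite /t2 mulrA mulfV // mul1r.
  case: (K01 _ (TrK t2)) => h2; last by exists t2.
  exists (x1 + t2); split; first by rewrite TrD Tx1 h2 addr0.
  by rewrite mulrDr TrD h1 Tt2 add0r.
exists be, nu, (T (nu * be)); split => //; first exact: TrK.
  by rewrite -subr_eq0 opprB addrCA subrr addr0 oner_eq0.
have hbg : T (nu * be) + T (nu * (be * be)) = 1 by rewrite -TrD -mulrDr mulrC.
have hb0 : T (nu * be) * (1 - T (nu * be)) = 0.
  by case: (K01 _ (TrK (nu * be))) => ->; rewrite ?mul0r ?subrr ?mulr0.
rewrite hb0 addr0; apply/eqP => e; move: hbg; rewrite -e => hbb.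
have : (1 + 1) * T (nu * be) = 1 by rewrite mulrDl mul1r.
by rewrite two0 mul0r => /eqP; rewrite eq_sym oner_eq0.
Qed.
Section Core.
Variables (be nu d mu : F).
Hypothesis beK : be \notin K.
Hypothesis Tnu : T nu = 1.
Hypothesis dK : d \in K.
Let b := T (nu * be).
Let g := T (nu * (be * be)).
Hypothesis C1 : d != b - 1.
Hypothesis C2 : d != g + b * (1 - b).
Definition Vf (rho : F) := d + (rho * (1 - b) - g + d) / (rho + b).
Hypothesis hmu : forall rho, rho \in K -> rho + b != 0 -> T (mu * (rho + be)^-1) != Vf rho.
Let de := d * nu.
Let nv := nu^-1.

Lemma nu_nz : nu != 0.
Proof. by apply/eqP => e; move: Tnu; rewrite e Tr0 => /eqP; rewrite eq_sym oner_eq0. Qed.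

Lemma Tde : T de = d.
Proof. by rewrite /de TrZ // Tnu mulr1. Qed.

Lemma core a x c x' c' : c \in K -> c' \in K ->
  x + de * c = a * mu * c' -> T x + be * c = a * nv * (x' + de * c') ->
  c = a * (T x' + be * c') ->
  (x = 0 /\ c = 0) \/ (x' = 0 /\ c' = 0).
Proof.
move=> cK c'K E1 E2 E3.
have bK : b \in K by apply: TrK.
have gK : g \in K by apply: TrK.
have [a0|nza] := eqVneq a 0.
  left; have c0 : c = 0 by rewrite E3 a0 mul0r.
  by split => //; move: E1; rewrite a0 c0 !mul0r mulr0 addr0.
have nznv : nv != 0 by rewrite invr_eq0 nu_nz.
have [c'0|nzc'] := eqVneq c' 0.
  have [c0|nzc] := eqVneq c 0.
    by left; split => //; move: E1; rewrite c0 c'0 !mulr0 addr0.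
  exfalso.
  have hx : x = - (de * c) by apply/eqP; rewrite -addr_eq0 E1 c'0 mulr0.
  have Tx : T x = - (c * d) by rewrite hx TrN mulrC TrZ // Tde.
  have E3' : c = a * T x' by rewrite E3 c'0 mulr0 addr0.
  have E2' : T x + be * c = a * nv * x' by rewrite E2 c'0 mulr0 addr0.
  have nzTx' : T x' != 0 by apply: contraNneq nzc => h; rewrite E3' h mulr0.
  have ha : a = c * (T x')^-1 by rewrite E3' mulfK.
  have aK : a \in K by rewrite ha KM // KV // TrK.
  have hx' : x' = (a^-1 * c) * (nu * be - d * nu).
    apply: (mulfI (mulf_neq0 nza nznv)); rewrite -E2' Tx /nv.
    by field; rewrite nza nu_nz.
  have Tx'2 : T x' = (a^-1 * c) * (b - d).
    by rewrite hx' TrZ ?KM ?KV // TrB (@TrZ d nu dK) Tnu mulr1.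
  have : a^-1 * c * (b - d) = a^-1 * c * 1 by rewrite mulr1 -Tx'2 E3' mulKf.
  move/(mulfI (mulf_neq0 (invr_neq0 nza) nzc)) => h.
  by move: C1; rewrite -h opprB addrCA subrr addr0 eqxx.
have [c0|nzc] := eqVneq c 0.
  exfalso.
  have h : T x' + be * c' = 0.
    by move: E3; rewrite c0 => /esym/eqP; rewrite mulf_eq0 (negbTE nza) /= => /eqP.
  have hb : be * c' = - T x' by apply/eqP; rewrite -addr_eq0 addrC h.
  have : be = - T x' * c'^-1 by rewrite -hb mulfK.
  by move=> hbe; move: beK; rewrite hbe KM // ?KV // KN // TrK.
pose rho := T x' * c'^-1.
have rhoK : rho \in K by rewrite KM // ?KV // TrK.
have Tx'E : T x' = rho * c' by rewrite /rho mulfVK.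
have rbe : rho + be != 0.
  apply/eqP => h; have hb : be = - rho by apply/eqP; rewrite -addr_eq0 addrC h.
  by move: beK; rewrite hb KN.
have ac' : a * c' = c * (rho + be)^-1.
  by rewrite E3 Tx'E; field; rewrite rbe.
have hx : x = c * (mu * (rho + be)^-1 - de).
  have -> : x = a * mu * c' - de * c by rewrite -E1 addrK.
  by rewrite mulrAC ac'; ring.
pose kap := T (mu * (rho + be)^-1) - d.
have kapK : kap \in K by rewrite KB // TrK.
have Tx : T x = c * kap by rewrite hx TrZ // TrB Tde.
have E2' : x' + de * c' = nu * a^-1 * (c * (kap + be)).
  apply: (mulfI (mulf_neq0 nza nznv)); rewrite -E2 Tx /nv.
  by field; rewrite nza nu_nz.
have hc : a^-1 * c = c' * (rho + be).
  by rewrite E3 Tx'E; field; rewrite nza.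
have hx' : x' = c' * (nu * (kap + be) * (rho + be)) - de * c'.
  have -> : x' = (x' + de * c') - de * c' by rewrite addrK.
  rewrite E2'.
  have -> : nu * a^-1 * (c * (kap + be)) = nu * (a^-1 * c) * (kap + be) by ring.
  by rewrite hc; ring.
have e1 : nu * (kap + be) * (rho + be) = (kap * rho) * nu + (kap + rho) * (nu * be) + nu * (be * be).
  by ring.
have Tx'2 : T x' = c' * (kap * rho + (kap + rho) * b + g - d).
  rewrite hx' TrB (@TrZ c' _ c'K) [de * c']mulrC (@TrZ c' de c'K) Tde e1 !TrD.
  rewrite (@TrZ (kap * rho) nu (KM kapK rhoK)) (@TrZ (kap + rho) _ (KD kapK rhoK)) Tnu.
  by rewrite -/b -/g; ring.
have e : rho = kap * rho + (kap + rho) * b + g - d.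
  by apply: (mulfI nzc'); rewrite [c' * rho]mulrC -Tx'E Tx'2.
have key : kap * (rho + b) = rho * (1 - b) - g + d.
  have -> : rho * (1 - b) - g + d = rho - (rho * b + g - d) by ring.
  by rewrite [X in _ = X - _]e; ring.
have [rb0|nzrb] := eqVneq (rho + b) 0.
  have rho_eq : rho = - b by apply/eqP; rewrite -addr_eq0 rb0.
  move: key; rewrite rb0 mulr0 rho_eq => key.
  have : d - (g + b * (1 - b)) = 0 by rewrite key; ring.
  by move/eqP; rewrite subr_eq0 (negbTE C2).
exfalso; move: (hmu rhoK nzrb); rewrite /Vf.
have -> : (rho * (1 - b) - g + d) / (rho + b) = kap by rewrite -key mulfK.
by rewrite /kap [d + _]addrC subrK eqxx.
Qed.

End Core.
Lemma mu_exists (be b g d : F) : be \notin K -> b \in K ->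
  exists mu : F, mu != 0 /\ forall rho, rho \in K -> rho + b != 0 ->
    T (mu * (rho + be)^-1) != d + (rho * (1 - b) - g + d) / (rho + b).
Proof.
move=> beK bK.
pose W rho := d + (rho * (1 - b) - g + d) / (rho + b).
have rbe : forall rho, rho \in K -> (rho + be)^-1 != 0.
  move=> rho rK; rewrite invr_eq0; apply/eqP => h.
  have hb : be = - rho by apply/eqP; rewrite -addr_eq0 addrC h.
  by move: beK; rewrite hb KN.
pose Bad := \bigcup_(rho in K :\ (- b)) [set m | T ((rho + be)^-1 * m) == W rho].
have cB : (#|Bad| <= (r - 1) * R)%N.
  apply: leq_trans (card_bigcup_le _ _) _.
  have : (\sum_(rho in K :\ - b) #|[set m | T ((rho + be)^-1 * m)%R == W rho]|
           <= \sum_(rho in K :\ - b) R)%N.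
    apply: leq_sum => rho; rewrite in_setD1 => /andP [_ rK].
    exact: card_Trfiber (rbe _ rK).
  move/leq_trans; apply; rewrite sum_nat_const leq_mul2r.
  have := cardsD1 (- b)%R K; rewrite KN // add1n => hK.
  apply/orP; right; have := card_K; rewrite hK => h.
  by rewrite subn1 -ltnS prednK // ltnW.
have : ~~ ([set~ (0 : F)] \subset Bad).
  apply/negP => /subset_leq_card; rewrite cardsC1 => h.
  have := leq_trans h cB; rewrite -rR mulnBl mul1n.
  have R2 := R_ge2; have rR1 : (R <= r * R)%N by rewrite leq_pmull // ltnW.
  move: (r * R)%N rR1 => n hn; lia.
case/subsetPn => m; rewrite in_setC1 => nzm mB; exists m; split => // rho rK nzrb.
apply: contra mB => /eqP h; apply/bigcupP; exists rho.
  rewrite in_setD1 rK andbT; apply: contra nzrb => /eqP ->; by rewrite addNr.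
by rewrite inE mulrC h.
Qed.

Section Maps.
Variables (be nu d mu : F).
Hypothesis beK : be \notin K.
Hypothesis Tnu : T nu = 1.
Hypothesis dK : d \in K.
Hypothesis C1 : d != T (nu * be) - 1.
Hypothesis C2 : d != T (nu * (be * be)) + T (nu * be) * (1 - T (nu * be)).
Hypothesis hmu : forall rho, rho \in K -> rho + T (nu * be) != 0 ->
  T (mu * (rho + be)^-1) != Vf be nu d rho.
Hypothesis nzmu : mu != 0.

Let de := d * nu.
Let nv := nu^-1.

Definition f0 x c := v3 (x + de * c) (T x + be * c) c.
Definition f1 x c := v3 (mu * c) (nv * (x + de * c)) (T x + be * c).
Definition f2 x c := v3 (mu * (T x + be * c)) (nv * mu * c) (nv * (x + de * c)).

Lemma nv_nz : nv != 0.
Proof. by rewrite invr_eq0 (nu_nz Tnu). Qed.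

Lemma f0B x1 c1 x2 c2 : f0 (x1 - x2) (c1 - c2) = f0 x1 c1 - f0 x2 c2.
Proof. by rewrite /f0 v3B TrB; congr v3; ring. Qed.
Lemma f1B x1 c1 x2 c2 : f1 (x1 - x2) (c1 - c2) = f1 x1 c1 - f1 x2 c2.
Proof. by rewrite /f1 v3B TrB; congr v3; ring. Qed.
Lemma f2B x1 c1 x2 c2 : f2 (x1 - x2) (c1 - c2) = f2 x1 c1 - f2 x2 c2.
Proof. by rewrite /f2 v3B TrB; congr v3; ring. Qed.

Lemma f0Z k x c : k \in K -> f0 (k * x) (k * c) = k *: f0 x c.
Proof. by move=> kK; rewrite /f0 v3Z TrZ //; congr v3; ring. Qed.
Lemma f1Z k x c : k \in K -> f1 (k * x) (k * c) = k *: f1 x c.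
Proof. by move=> kK; rewrite /f1 v3Z TrZ //; congr v3; ring. Qed.
Lemma f2Z k x c : k \in K -> f2 (k * x) (k * c) = k *: f2 x c.
Proof. by move=> kK; rewrite /f2 v3Z TrZ //; congr v3; ring. Qed.

Lemma f0nz x c : c \in K -> f0 x c = 0 -> x = 0 /\ c = 0.
Proof.
move=> _ /v3_eq0 [h1 _ hc]; split => //; by move: h1; rewrite hc mulr0 addr0.
Qed.
Lemma f1nz x c : c \in K -> f1 x c = 0 -> x = 0 /\ c = 0.
Proof.
move=> _ /v3_eq0 [h1 h2 _].
have c0 : c = 0 by move/eqP: h1; rewrite mulf_eq0 (negbTE nzmu) => /eqP.
split => //; move/eqP: h2; rewrite mulf_eq0 (negbTE nv_nz) c0 mulr0 addr0.
by move/eqP.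
Qed.
Lemma f2nz x c : c \in K -> f2 x c = 0 -> x = 0 /\ c = 0.
Proof.
move=> _ /v3_eq0 [_ h2 h3].
have c0 : c = 0.
  by move/eqP: h2; rewrite !mulf_eq0 (negbTE nzmu) (negbTE nv_nz) => /eqP.
split => //; move/eqP: h3; rewrite mulf_eq0 (negbTE nv_nz) c0 mulr0 addr0.
by move/eqP.
Qed.

Lemma f0ker x : T x = 0 -> f0 x 0 = x *: v3 1 0 0.
Proof. by move=> h; rewrite /f0 v3Z h; congr v3; ring. Qed.
Lemma f1ker x : T x = 0 -> f1 x 0 = x *: v3 0 nv 0.
Proof. by move=> h; rewrite /f1 v3Z h; congr v3; ring. Qed.
Lemma f2ker x : T x = 0 -> f2 x 0 = x *: v3 0 0 nv.
Proof. by move=> h; rewrite /f2 v3Z h; congr v3; ring. Qed.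

Let coreH := core beK Tnu dK C1 C2 hmu.

Lemma notdom0 x c : (x, c) \in Dom -> ~ (x = 0 /\ c = 0).
Proof. by rewrite inDom => /andP [_ h] [hx hc]; move: h; rewrite hx hc eqxx. Qed.

Lemma disj01 x c x' c' : (x, c) \in Dom -> (x', c') \in Dom ->
  pt (f0 x c) != pt (f1 x' c').
Proof.
move=> D1 D2; apply/eqP => /pt_eq [a].
rewrite /f1 v3Z => /v3_inj [E1 E2 E3].
have cK : c \in K by move: (D1); rewrite inDom => /andP [].
have c'K : c' \in K by move: (D2); rewrite inDom => /andP [].
move: E1 E2; rewrite !mulrA => E1 E2.
case: (coreH cK c'K E1 E2 E3) => h.
  exact: (notdom0 D1).
exact: (notdom0 D2).
Qed.

Lemma disj12 x c x' c' : (x, c) \in Dom -> (x', c') \in Dom ->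
  pt (f1 x c) != pt (f2 x' c').
Proof.
move=> D1 D2; apply/eqP => /pt_eq [a].
rewrite /f1 /f2 v3Z => /v3_inj [E1' E2' E3'].
have cK : c \in K by move: (D1); rewrite inDom => /andP [].
have c'K : c' \in K by move: (D2); rewrite inDom => /andP [].
have E1 : x + de * c = a * mu * c' by apply: (mulfI nv_nz); rewrite E2'; ring.
have E3 : c = a * (T x' + be * c') by apply: (mulfI nzmu); rewrite E1'; ring.
have E2 : T x + be * c = a * nv * (x' + de * c') by rewrite E3' mulrA.
case: (coreH cK c'K E1 E2 E3) => h.
  exact: (notdom0 D1).
exact: (notdom0 D2).
Qed.

Lemma disj02 x c x' c' : (x, c) \in Dom -> (x', c') \in Dom ->
  pt (f0 x c) != pt (f2 x' c').
Proof.
move=> D1 D2; apply/eqP => /pt_eq [a].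
rewrite /f0 /f2 v3Z => /v3_inj [E1' E2' E3'].
have cK : c \in K by move: (D1); rewrite inDom => /andP [].
have c'K : c' \in K by move: (D2); rewrite inDom => /andP [].
have [a0|nza] := eqVneq a 0.
  apply: (notdom0 D1); have c0 : c = 0 by rewrite E3' a0 mul0r.
  by split => //; move: E1'; rewrite a0 c0 mul0r mulr0 addr0.
pose a' := (a * mu * nv)^-1.
have E1 : x' + de * c' = a' * mu * c.
  by rewrite E3' /a'; field; rewrite nza nzmu nv_nz.
have E2 : T x' + be * c' = a' * nv * (x + de * c).
  by rewrite E1' /a'; field; rewrite nza nzmu nv_nz.
have E3 : c' = a' * (T x + be * c).
  by rewrite E2' /a'; field; rewrite nza nzmu nv_nz.
case: (coreH c'K cK E1 E2 E3) => h.
  exact: (notdom0 D2).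
exact: (notdom0 D1).
Qed.

End Maps.
Lemma construction (t : nat) : t = 2%N \/ t = 3%N ->
  exists B0 : {set {set 'rV[F]_3}},
    [/\ forall P, P \in B0 -> pg2_point P,
        forall l : 'cV[F]_3, (t <= #|[set P in B0 | pg2_incident P l]|)%N
      & (#|B0| <= t * (#|F| + R + 1))%N].
Proof.
move=> ht.
have [be [nu [d [beK Tnu dK C1 C2]]]] := params.
have [mu [nzmu hmu0]] := mu_exists (T (nu * (be * be))) d beK (TrK (nu * be)).
have hmu : forall rho, rho \in K -> rho + T (nu * be) != 0 ->
    T (mu * (rho + be)^-1) != Vf be nu d rho by exact: hmu0.
pose L0 := Lset (f0 be nu d).
pose L1 := Lset (f1 be nu d mu).
pose L2 := Lset (f2 be nu d mu).
have P0 : forall P, P \in L0 -> pg2_point P := Lset_point (@f0nz be nu d).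
have P1 : forall P, P \in L1 -> pg2_point P := Lset_point (f1nz Tnu nzmu).
have P2 : forall P, P \in L2 -> pg2_point P := Lset_point (f2nz Tnu nzmu).
have B0 := Lset_block (f0B be nu d).
have B1 := Lset_block (f1B be nu d mu).
have B2 := Lset_block (f2B be nu d mu).
have c0 := Lset_card (f0Z be nu d) (f0ker be nu d).
have c1 := Lset_card (f1Z be nu d mu) (f1ker be nu d mu).
have c2 := Lset_card (f2Z be nu d mu) (f2ker be nu d mu).
have d01 : forall P, P \in L0 -> P \notin L1.
  move=> P /imsetP [[x c] D1 ->]; apply/negP => /imsetP [[x' c'] D2 e].
  by move: (disj01 beK Tnu dK C1 C2 hmu D1 D2); rewrite e eqxx.
have d12 : forall P, P \in L1 -> P \notin L2.
  move=> P /imsetP [[x c] D1 ->]; apply/negP => /imsetP [[x' c'] D2 e].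
  by move: (disj12 beK Tnu dK C1 C2 hmu nzmu D1 D2); rewrite e eqxx.
have d02 : forall P, P \in L0 -> P \notin L2.
  move=> P /imsetP [[x c] D1 ->]; apply/negP => /imsetP [[x' c'] D2 e].
  by move: (disj02 beK Tnu dK C1 C2 hmu nzmu D1 D2); rewrite e eqxx.
case: ht => ->.
  exists (L0 :|: L1); split.
  - by move=> P /setUP [] ?; [apply: P0 | apply: P1].
  - move=> l; have [Q0 [Q0L Q0i]] := B0 l; have [Q1 [Q1L Q1i]] := B1 l.
    have nq : Q0 != Q1 by apply: contraNneq (d01 _ Q0L) => ->.
    apply: (@leq_trans #|[set Q0; Q1]|); first by rewrite cards2 nq.
    apply: subset_leq_card; apply/subsetP => Q.
    by rewrite !inE => /orP [] /eqP ->; rewrite ?Q0L ?Q1L ?Q0i ?Q1i ?orbT.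
  - apply: leq_trans (leq_card_setU _ _) _.
    by rewrite mul2n -addnn leq_add.
exists (L0 :|: L1 :|: L2); split.
- by move=> P /setUP [/setUP [] ?|?]; [apply: P0 | apply: P1 | apply: P2].
- move=> l; have [Q0 [Q0L Q0i]] := B0 l; have [Q1 [Q1L Q1i]] := B1 l.
  have [Q2 [Q2L Q2i]] := B2 l.
  have n01 : Q0 != Q1 by apply: contraNneq (d01 _ Q0L) => ->.
  have n12 : Q1 != Q2 by apply: contraNneq (d12 _ Q1L) => ->.
  have n02 : Q0 != Q2 by apply: contraNneq (d02 _ Q0L) => ->.
  have h3 : #|[set Q0; Q1; Q2]| = 3%N.
    rewrite -setUA cardsU1 cards2 n12 !inE negb_or n01 n02.
    by [].
  apply: (@leq_trans #|[set Q0; Q1; Q2]|); first by rewrite h3.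
  apply: subset_leq_card; apply/subsetP => Q.
  by rewrite !inE => /orP [/orP []|] /eqP ->; rewrite ?Q0L ?Q1L ?Q2L ?Q0i ?Q1i ?Q2i ?orbT.
- apply: leq_trans (leq_card_setU _ _) _.
  rewrite mulSn addnC leq_add //.
  apply: leq_trans (leq_card_setU _ _) _.
  by rewrite mul2n -addnn leq_add.
Qed.

End Main.
Lemma pad (U : finType) (S B0 : {set U}) (N : nat) :
  B0 \subset S -> (#|B0| <= N)%N -> (N <= #|S|)%N ->
  exists B : {set U}, [/\ B0 \subset B, B \subset S & #|B| = N].
Proof.
move=> sub le1 le2.
have gen : forall k (B1 : {set U}), B1 \subset S -> (#|B1| + k <= #|S|)%N ->
    exists B : {set U}, [/\ B1 \subset B, B \subset S & #|B| = #|B1| + k].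
  elim => [|k IH] B1 s1 h.
    by exists B1; rewrite addn0; split.
  have : ~~ (S \subset B1).
    apply/negP => /subset_leq_card h2; move: h; rewrite addnS => h3.
    by move: (leq_trans h3 h2); rewrite ltnNge leq_addr.
  case/subsetPn => x xS xB1.
  have s2 : x |: B1 \subset S by rewrite subUset sub1set xS s1.
  have c2 : #|x |: B1| = #|B1|.+1 by rewrite cardsU1 xB1.
  have h4 : (#|x |: B1| + k <= #|S|)%N by rewrite c2 addSn -addnS.
  have [B [hB1 hB2 hB3]] := IH (x |: B1) s2 h4.
  exists B; split => //; last by rewrite hB3 c2 addnS.
  by apply: subset_trans hB1; apply: subsetUr.
have h0 : (#|B0| + (N - #|B0|) <= #|S|)%N by rewrite subnKC.
have [B [h1 h2 h3]] := gen (N - #|B0|)%N B0 sub h0.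
by exists B; split => //; rewrite h3 subnKC.
Qed.

Section Count.
Local Open Scope ring_scope.
Variable F : finFieldType.

Lemma pt_v3_eq (a b c a' b' c' : F) : pt (v3 a b c) = pt (v3 a' b' c') ->
  exists k, [/\ a = k * a', b = k * b' & c = k * c'].
Proof. by case/pt_eq => k; rewrite v3Z => /v3_inj [h1 h2 h3]; exists k. Qed.

Definition ptmap (z : ((F * F) + (F + unit))%type) : {set 'rV[F]_3} :=
  match z with
  | inl xy => pt (v3 xy.1 xy.2 1)
  | inr (inl x) => pt (v3 x 1 0)
  | inr (inr _) => pt (v3 1 0 0)
  end.

Lemma ptmap_inj : injective ptmap.
Proof.
move=> [[x y]|[x|[]]] [[x' y']|[x'|[]]] /= /pt_v3_eq [k [h1 h2 h3]].
- have k1 : k = 1 by rewrite h3 mulr1.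
  by rewrite h1 h2 k1 !mul1r.
- by move: h3; rewrite mulr0 => /eqP; rewrite oner_eq0.
- by move: h3; rewrite mulr0 => /eqP; rewrite oner_eq0.
- by move: h3; rewrite mulr1 => h; move: h1 h2; rewrite -h => _; rewrite mul0r => /eqP; rewrite oner_eq0.
- have k1 : k = 1 by rewrite h2 mulr1.
  by rewrite h1 k1 mul1r.
- by move: h2; rewrite mulr0 => /eqP; rewrite oner_eq0.
- by move: h3; rewrite mulr1 => h; move: h1; rewrite -h mul0r => /eqP; rewrite oner_eq0.
- by move: h2; rewrite mulr1 => h; move: h1; rewrite -h mul0r => /eqP; rewrite oner_eq0.
- by [].
Qed.

Lemma card_points : (#|F| * #|F| + (#|F| + 1) <= #|[set P : {set 'rV[F]_3} | pg2_point P]|)%N.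
Proof.
have -> : (#|F| * #|F| + (#|F| + 1))%N = #|[set ptmap z | z in [set: ((F * F) + (F + unit))%type]]|.
  by rewrite card_imset ?cardsT ?card_sum ?card_prod ?card_unit //; apply: ptmap_inj.
apply: subset_leq_card; apply/subsetP => P /imsetP [z _ ->]; rewrite inE.
by case: z => [[x y]|[x|[]]] /=; apply: pt_point; apply: v3_neq0;
  rewrite ?oner_eq0 ?orbT.
Qed.

End Count.
Unset Implicit Arguments.

Theorem theorem1p2 (p n : nat) (F : finFieldType) :
  prime p -> (1 < n)%N -> #|F| = (p ^ n)%N ->
  forall t : nat, t = 2%N \/ t = 3%N ->
  exists B : {set {set 'rV[F]_3}},
    pg2_tfold_blocking_set t B /\
    #|B| = (t * (p ^ n + p ^ (n * (pdiv n - 1) %/ pdiv n) + 1))%N.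
Proof.
move=> pp n1 cardF t ht.
pose s := pdiv n.
have sP : prime s := pdiv_prime n1.
have s1 : (1 < s)%N := prime_gt1 sP.
have sn : (s %| n)%N := pdiv_dvd n.
pose e := (n %/ s)%N.
have ne : n = (e * s)%N by rewrite /e divnK.
have e0 : (0 < e)%N by rewrite lt0n; apply/eqP => e00; move: n1; rewrite ne e00.
pose r := (p ^ e)%N.
have r_gt1 : (1 < r)%N by rewrite /r -{1}(expn0 p) ltn_exp2l // prime_gt1.
have hp : p \in [pchar F]%R := card_finPcharP cardF pp.
have r_pchar : [pchar F]%R.-nat r.
  by rewrite /r (eq_pnat _ (pcharf_eq hp)) pnatX pnat_id.
have cardF' : #|F| = (r ^ s)%N by rewrite cardF ne expnM.
have hR : (p ^ (n * (pdiv n - 1) %/ pdiv n))%N = (r ^ s.-1)%N.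
  by rewrite -/s ne mulnAC mulnK ?prime_gt0 // expnM subn1.
have [B0 [hP hL hC]] := construction r_gt1 s1 r_pchar cardF' ht.
pose S := [set P : {set 'rV[F]_3} | pg2_point P].
have sub : B0 \subset S by apply/subsetP => P PB; rewrite inE hP.
have hS : (t * (#|F| + r ^ s.-1 + 1) <= #|S|)%N.
  apply: leq_trans (card_points F).
  have rR : (r * r ^ s.-1)%N = #|F| by rewrite cardF' -expnS prednK // ltnW.
  have q4 : (4 <= #|F|)%N.
    rewrite cardF' (leq_trans (_ : 4 <= r ^ 2)%N) // ?leq_exp2l //.
    by rewrite (leq_trans (_ : 4 <= 2 ^ 2)%N) // leq_exp2r.
  have h2R : (2 * r ^ s.-1 <= #|F|)%N by rewrite -rR leq_mul2r r_gt1 orbT.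
  have hqq : (4 * #|F| <= #|F| * #|F|)%N by rewrite leq_mul2r q4 orbT.
  move: h2R hqq q4; move: (r ^ s.-1)%N (#|F| * #|F|)%N #|F| => R Q q h1 h2 h3.
  by case: ht => ->; lia.
have [B [h1 h2 h3]] := pad sub hC hS.
exists B; split; last by rewrite h3 -cardF hR.
split.
  by move=> P /(subsetP h2); rewrite inE.
move=> l _; apply: leq_trans (hL l) _; apply: subset_leq_card.
by apply/subsetP => P; rewrite !inE => /andP [PB ->]; rewrite (subsetP h1 _ PB).
Qed.
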